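(* Let $a>0$ be constant and consider $\partial_t u+\partial_x(au)=0$ on a periodic 1D mesh. Let $n\ge1$ and $-1=\tau_0<\tau_1<\dots<\tau_n=1$. Consider the Spectral Difference (SD) scheme (context) with flux points $\tau_0,\dots,\tau_n$ and solution points $\sigma_j=\tau_j$ for $j=1,\dots,n$ (the flux points excluding the left endpoint), with the upwind numerical flux. Consider also the FUSE scheme of degree $p=n$ with nodes $r_i=\tau_i$, $i=0,\dots,n$ (context). Then, under the identification $v_{j,k}=u_{j,k}$ for $j=1,\dots,n$ and all elements $k$ (which is a bijection between the unknowns of the two schemes, since $u_{0,k}=u_{n,k-1}$ in FUSE), the two semi-discrete systems of ODEs are identical.
   Context: Mesh: $0=x_0<\dots<x_N=1$, periodic, elements $K_k=[x_{k-1},x_k]$ (indices mod $N$), affine maps $\chi_k(r)=x_{k-1}+\tfrac{r+1}{2}(x_k-x_{k-1})$ from $[-1,1]$ to $K_k$. SD scheme: in each element $K_k$ there are $n$ solution points $\chi_k(\sigma_1),\dots,\chi_k(\sigma_n)$ carrying unknowns $v_{1,k},\dots,v_{n,k}$ (not shared between elements), and $n+1$ flux points $\chi_k(\tau_0),\dots,\chi_k(\tau_n)$ with $\tau_0=-1,\tau_n=1$ (so flux points at element endpoints are repeated in neighbouring elements). Let $v_h^{(k)}$ be the polynomial of degree $\le n-1$ on $K_k$ interpolating $v_{j,k}$ at the solution points. Flux values: at interior flux points ($0<m<n$) the flux is $a\,v_h^{(k)}(\chi_k(\tau_m))$; at element endpoints the upwind numerical flux is used, i.e. at $x_{k-1}$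 (point $\tau_0$ of $K_k$) the value $a\,v_h^{(k-1)}(x_{k-1})$ and at $x_k$ (point $\tau_n$ of $K_k$) the value $a\,v_h^{(k)}(x_k)$. Let $G^{(k)}$ be the polynomial of degree $\le n$ interpolating these $n+1$ flux values at the flux points; the SD update is $\frac{d}{dt}v_{j,k}=-(G^{(k)})'(\chi_k(\sigma_j))$. FUSE scheme of degree $p$ with nodes $-1=r_0<\dots<r_p=1$: nodes $s_{i,k}=\chi_k(r_i)$ with boundary nodes shared ($s_{p,k}=s_{0,k+1}$, single value, so $u_{0,k}=u_{p,k-1}$); $F_h^{(k)}$ is the polynomial of degree $\le p$ interpolating $a\,u_{i,k}$ at $s_{i,k}$, $i=0,\dots,p$; update $\frac{d}{dt}u_{i,k}=-(F_h^{(k)})'(s_{i,k})$ for $1\le i\le p-1$, and at the shared node $s_{p,k}=s_{0,k+1}$ the upwind element is used: since $a>0$, $\frac{d}{dt}u_{p,k}=-(F_h^{(k)})'(s_{p,k})$. *)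

(* Defs.v *)
From HB Require Import structures.
From mathcomp Require Import all_boot all_order all_algebra.
Set Implicit Arguments. Unset Strict Implicit. Unset Printing Implicit Defensive.
Import Order.TTheory GRing.Theory Num.Theory.
Local Open Scope ring_scope.

Section Schemes.
Variable R : realFieldType.

Definition interp (m : nat) (s : 'I_m -> R) (f : 'I_m -> R) : {poly R} :=
  \sum_(i < m) f i *:
     \prod_(j < m | j != i) (('X - (s j)%:P) * ((s i - s j)^-1)%:P).

(* Mesh 0 = x 0 < ... < x N = 1; element k : 'I_N is [x k, x (k+1)]
   (paper's K_{k+1}); its periodic left neighbour is ord_pred k. *)
Definition chi (x : nat -> R) (N : nat) (k : 'I_N) (r : R) : R :=
  x k + (r + 1) / 2 * (x k.+1 - x k).

Definition sd_vh (x : nat -> R) (N n : nat) (sigma : 'I_n -> R)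
  (v : 'I_N -> 'I_n -> R) (k : 'I_N) : {poly R} :=
  interp (fun j => chi x k (sigma j)) (v k).

Definition sd_flux (a : R) (x : nat -> R) (N n : nat) (sigma : 'I_n -> R)
  (tau : 'I_n.+1 -> R) (v : 'I_N -> 'I_n -> R) (k : 'I_N) (m : 'I_n.+1) : R :=
  if val m == 0%N then
    (* upwind: left endpoint x_k, value of the left neighbour's polynomial
       at its right endpoint (periodically identified with x_k) *)
    a * (sd_vh x sigma v (ord_pred k)).[x (ord_pred k).+1]
  else if val m == n then a * (sd_vh x sigma v k).[x k.+1]
  else a * (sd_vh x sigma v k).[chi x k (tau m)].

Definition sd_G (a : R) (x : nat -> R) (N n : nat) (sigma : 'I_n -> R)
  (tau : 'I_n.+1 -> R) (v : 'I_N -> 'I_n -> R) (k : 'I_N) : {poly R} :=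
  interp (fun m => chi x k (tau m)) (sd_flux a x sigma tau v k).

Definition sd_rhs (a : R) (x : nat -> R) (N n : nat) (sigma : 'I_n -> R)
  (tau : 'I_n.+1 -> R) (v : 'I_N -> 'I_n -> R) (k : 'I_N) (j : 'I_n) : R :=
  - (sd_G a x sigma tau v k)^`().[chi x k (sigma j)].

Definition fuse_shared (N p : nat) (u : 'I_N -> 'I_p.+1 -> R) : Prop :=
  forall k : 'I_N, u k ord0 = u (ord_pred k) ord_max.

Definition fuse_F (a : R) (x : nat -> R) (N p : nat) (r : 'I_p.+1 -> R)
  (u : 'I_N -> 'I_p.+1 -> R) (k : 'I_N) : {poly R} :=
  interp (fun i => chi x k (r i)) (fun i => a * u k i).

(* right-hand side of d/dt u_{i,k}, for 1 <= i <= p (at i = p the upwind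
   element k is used, a > 0) *)
Definition fuse_rhs (a : R) (x : nat -> R) (N p : nat) (r : 'I_p.+1 -> R)
  (u : 'I_N -> 'I_p.+1 -> R) (k : 'I_N) (i : 'I_p.+1) : R :=
  - (fuse_F a x r u k)^`().[chi x k (r i)].

End Schemes.

(* Main.v *)
Require Import Defs.
From HB Require Import structures.
From mathcomp Require Import all_boot all_order all_algebra.
Import Order.TTheory GRing.Theory Num.Theory.
Local Open Scope ring_scope.

Lemma interp_node (R : realFieldType) m (s f : 'I_m -> R) i :
  injective s -> (interp s f).[s i] = f i.
Proof.
move=> inj; rewrite /interp horner_sum (bigD1 i) //= [X in _ + X]big1 ?addr0.
- rewrite hornerZ horner_prod big1 ?mulr1 // => j ji.
  rewrite hornerM hornerXsubC hornerC mulfV // subr_eq0; apply/eqP => /inj E.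
  by rewrite E eqxx in ji.
- move=> i0 ni0; rewrite hornerZ horner_prod (bigD1 i) /=; last by rewrite eq_sym.
  by rewrite hornerM hornerXsubC subrr !mul0r mulr0.
Qed.

Lemma interp_ext (R : realFieldType) m (s f g : 'I_m -> R) :
  f =1 g -> interp s f = interp s g.
Proof. by move=> H; rewrite /interp; apply: eq_bigr => i _; rewrite H. Qed.

Lemma chi1 (R : realFieldType) (x : nat -> R) N (k : 'I_N) : chi x k 1 = x k.+1.
Proof.
rewrite /chi (_ : (1 + 1) / 2 = 1 :> R); first by rewrite mul1r addrC subrK.
by rewrite divff // -(natrD _ 1 1) pnatr_eq0.
Qed.

Lemma chi_inj (R : realFieldType) (x : nat -> R) N (k : 'I_N) :
  x k < x k.+1 -> injective (chi x k).
Proof.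
move=> lt r1 r2; rewrite /chi => /addrI /mulIf.
have -> : x k.+1 - x k != 0 by rewrite subr_eq0 gt_eqF.
move=> /(_ isT) /(congr1 (fun y => y * 2)).
rewrite !divfK ?pnatr_eq0 //; exact: addIr.
Qed.

Theorem mainTheorem3 (R : realFieldType) (a : R) (N n : nat)
  (x : nat -> R) (tau : 'I_n.+1 -> R) :
  0 < a -> (0 < N)%N -> (1 <= n)%N ->
  x 0%N = 0 -> x N = 1 -> (forall i : nat, (i < N)%N -> x i < x i.+1) ->
  tau ord0 = -1 -> tau ord_max = 1 ->
  (forall i j : 'I_n.+1, (i < j)%N -> tau i < tau j) ->
  forall u : 'I_N -> 'I_n.+1 -> R, fuse_shared u ->
  forall (k : 'I_N) (j : 'I_n),
    sd_rhs a x (fun j' : 'I_n => tau (lift ord0 j')) tau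
      (fun k' j' => u k' (lift ord0 j')) k j
    = fuse_rhs a x tau u k (lift ord0 j).
Proof.
move=> a0 N0 n1 x0 xN xinc tau0 taun tinc u sh k j.
have tinj : injective tau.
  move=> i1 i2 E; apply/val_inj/eqP; case: (ltngtP (val i1) (val i2)) => // h.
  - by have := tinc _ _ h; rewrite E ltxx.
  - by have := tinc _ _ h; rewrite E ltxx.
have node : forall (k' : 'I_N) (m : 'I_n.+1), val m != 0%N ->
    (sd_vh x (fun j' : 'I_n => tau (lift ord0 j')) (fun k' j' => u k' (lift ord0 j')) k').[chi x k' (tau m)] = u k' m.
  move=> k' m m0.
  have hm : (m.-1 < n)%N by rewrite -ltnS prednK ?lt0n.
  have -> : m = lift ord0 (Ordinal hm).
    by apply: val_inj; rewrite /= /bump /= add1n prednK ?lt0n.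
  have inj : injective (fun j0 : 'I_n => chi x k' (tau (lift ord0 j0))).
    move=> i1 i2 /(@chi_inj R x N k' (xinc _ (ltn_ord k'))) /tinj; exact: lift_inj.
  rewrite /sd_vh; exact: (@interp_node _ _ _ _ _ inj).
have Hf : sd_flux a x (fun j' : 'I_n => tau (lift ord0 j')) tau
      (fun k' j' => u k' (lift ord0 j')) k =1 fun i => a * u k i.
  move=> m; rewrite /sd_flux.
  have nmax : val (@ord_max n) != 0%N by rewrite /= -lt0n.
  case: eqP => [m0|/eqP m0].
    have -> : m = ord0 by apply: val_inj.
    by rewrite sh -chi1 -taun node.
  case: eqP => [mn|_]; last by rewrite node.
  have -> : m = ord_max by apply: val_inj.
  by rewrite -chi1 -taun node.
by rewrite /sd_rhs /fuse_rhs /sd_G (@interp_ext _ _ _ _ _ Hf).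
Qed.
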